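(* Let $G_H$ be a finite undirected multigraph (parallel edges allowed, no self-loops) with vertex set $V$ and edge set partitioned as $E = S \sqcup S^c$ into secure edges $S$ and insecure edges $S^c$, and let $0 < p_J^{S^c} \le p_J^{S} \le p_I$ be real costs satisfying $p_J^{S^c} \ge p_I/2$ and $p_J^{S} \ge p_I/2$. Consider the following two problems. (I-A) Find a cut $C^*$ of minimum cardinality among cuts $C$ with $n^S_C < |C|/2$; form the attack on $C^*$ that injects data into $\lfloor (1+|C^*|)/2\rfloor$ insecure edges of $C^*$, jams $(1 - (|C^*| \bmod 2))$ further insecure edges of $C^*$, and leaves all other edges untouched. (I-B) Give weight $p_J^{S}$ to secure edges and $p_I - p_J^{S}$ to insecure edges, and find a cut $C^*$ of minimum weight among cuts $C$ with $n^S_C \ge |C|/2$ and $n^{S^c}_C > 0$; form the attack on $C^*$ that injects data into all insecure edges of $C^*$ and jams $n^S_{C^*} + 1 - n^{S^c}_{C^*}$ secure edges of $C^*$. Then, among the attacks produced by those of the two problems that have a feasible solution, one of minimum cost is an optimal detectable generalized attack in $G_H$.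
   Context: For a nonempty proper subset $U \subsetneq V$, the cut $\delta(U)$ is the set of edges with exactly one endpoint in $U$; a cut of $G_H$ is any set of this form. For a cut $C$, $n^S_C = |C\cap S|$ and $n^{S^c}_C = |C \cap S^c|$. The costs are: $p_J^{S^c}$ per jammed insecure edge, $p_J^S$ per jammed secure edge, $p_I$ per insecure edge with injected data. A generalized attack is a triple $(C,J,I)$ where $C$ is a cut, $J \subseteq C$ is the set of jammed edges, and $I \subseteq (C \cap S^c)\setminus J$ is a nonempty set of injected edges; its cost is $p_J^{S}|J\cap S| + p_J^{S^c}|J \cap S^c| + p_I |I|$. The attack is detectable if $2|I| > |C \setminus J|$ (the injected edges form a strict majority of the non-jammed edges of the cut). An optimal detectable generalized attack is one of minimum cost among all detectable generalized attacks. *)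

(* Defs.v *)
From HB Require Import structures.
From mathcomp Require Import all_boot all_order all_algebra.
Set Implicit Arguments. Unset Strict Implicit. Unset Printing Implicit Defensive.
Import Order.TTheory GRing.Theory Num.Theory.

(* A finite undirected multigraph: vertices V, edges E, each edge e has the
   (unordered) pair of endpoints {src e, dst e}; parallel edges are allowed
   (distinct elements of E with the same endpoints); no self loops is a
   hypothesis of the theorem. *)

Section Attacks.
Variables (V E : finType) (src dst : E -> V) (S : {set E}).

Definition delta (U : {set V}) : {set E} :=
  [set e | (src e \in U) != (dst e \in U)].

Definition is_cut (C : {set E}) : Prop :=
  exists U : {set V}, [/\ U != set0, U != setT & C = delta U].

Definition nS (C : {set E}) : nat := #|C :&: S|.
Definition nSc (C : {set E}) : nat := #|C :&: ~: S|.

Record gattack := GAttack { acut : {set E}; ajam : {set E}; ainj : {set E} }.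

Definition is_gattack (a : gattack) : Prop :=
  [/\ is_cut (acut a), ajam a \subset acut a,
      ainj a \subset (acut a :&: ~: S) :\: ajam a & ainj a != set0].

Definition detectable (a : gattack) : bool :=
  #|acut a :\: ajam a| < 2 * #|ainj a|.

Section Costs.
Variables (R : realFieldType) (pJS pJSc pI : R).

Definition cost (a : gattack) : R :=
  (pJS * #|ajam a :&: S|%:R + pJSc * #|ajam a :&: ~: S|%:R + pI * #|ainj a|%:R)%R.

Definition optimal_detectable (a : gattack) : Prop :=
  [/\ is_gattack a, detectable a &
      forall b, is_gattack b -> detectable b -> (cost a <= cost b)%R].

Definition feasA (C : {set E}) : Prop := is_cut C /\ 2 * nS C < #|C|.
Definition optA (C : {set E}) : Prop :=
  feasA C /\ forall C', feasA C' -> #|C| <= #|C'|.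
Definition attackA (C : {set E}) (a : gattack) : Prop :=
  [/\ acut a = C,
      ainj a \subset C :&: ~: S, #|ainj a| = (1 + #|C|) %/ 2,
      ajam a \subset (C :&: ~: S) :\: ainj a & #|ajam a| = 1 - (#|C| %% 2)].

Definition weightB (C : {set E}) : R :=
  (pJS * (nS C)%:R + (pI - pJS) * (nSc C)%:R)%R.
Definition feasB (C : {set E}) : Prop := [/\ is_cut C, #|C| <= 2 * nS C & 0 < nSc C].
Definition optB (C : {set E}) : Prop :=
  feasB C /\ forall C', feasB C' -> (weightB C <= weightB C')%R.
Definition attackB (C : {set E}) (a : gattack) : Prop :=
  [/\ acut a = C, ainj a = C :&: ~: S,
      ajam a \subset C :&: S & #|ajam a| = nS C + 1 - nSc C].

Definition produced (a : gattack) : Prop :=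
  exists C, (optA C /\ attackA C a) \/ (optB C /\ attackB C a).

End Costs.
End Attacks.

(* Main.v *)
Require Import Defs.
From HB Require Import structures.
From mathcomp Require Import all_boot all_order all_algebra.
From mathcomp Require Import zify ring lra.
Import Order.TTheory GRing.Theory Num.Theory.
Set Implicit Arguments. Unset Strict Implicit. Unset Printing Implicit Defensive.


Lemma sub_card (T : finType) n (A : {set T}) :
  n <= #|A| -> exists B : {set T}, B \subset A /\ #|B| = n.
Proof.
move/card_geqP => [s [us ss sub]]; exists [set x in s]; split.
  by apply/subsetP => x; rewrite inE; exact: sub.
by rewrite cardsE (card_uniqP us).
Qed.

Lemma card_split (E : finType) (S C : {set E}) : #|C| = #|C :&: S| + #|C :&: ~: S|.
Proof. by rewrite -setDE cardsID. Qed.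

Definition cutb (V E : finType) (src dst : E -> V) (C : {set E}) : bool :=
  [exists U : {set V}, [&& U != set0, U != setT & C == delta src dst U]].

Lemma cutP (V E : finType) (src dst : E -> V) C : is_cut src dst C <-> cutb src dst C.
Proof.
split.
  by move=> [U [h1 h2 h3]]; apply/existsP; exists U; rewrite h1 h2 h3 eqxx.
by move/existsP => [U /and3P [h1 h2 /eqP h3]]; exists U.
Qed.

Lemma optA_ex (V E : finType) (src dst : E -> V) S C0 :
  feasA src dst S C0 -> exists C, optA src dst S C.
Proof.
move=> [c0 h0].
pose P := [pred C | cutb src dst C && (2 * nS S C < #|C|)].
have P0 : P C0.
  by rewrite /= h0 andbT; apply/cutP.
case: (@arg_minnP _ C0 P (fun C => #|C|) P0) => C /andP [c1 c2] hmin.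
exists C; split; first by split => //; apply/cutP.
move=> C' [c1' c2']; apply: hmin; rewrite inE /= c2' andbT; exact/cutP.
Qed.

Lemma optB_ex (V E : finType) (src dst : E -> V) S (R : realFieldType) (pJS pI : R) C0 :
  feasB src dst S C0 -> exists C, optB src dst S pJS pI C.
Proof.
move=> [c0 h0 h1].
pose P := [pred C | [&& cutb src dst C, #|C| <= 2 * nS S C & 0 < nSc S C]].
have P0 : P C0.
  by rewrite /= h0 h1 !andbT; apply/cutP.
case: (@arg_minP _ R _ C0 P (weightB S pJS pI) P0) => C /and3P [c1 c2 c3] hmin.
exists C; split; first by split => //; apply/cutP.
move=> C' [c1' c2' c3']; apply: hmin; rewrite inE /= c2' c3' !andbT; exact/cutP.
Qed.

Lemma attackA_ex (V E : finType) (src dst : E -> V) S C :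
  feasA src dst S C -> exists a, attackA S C a.
Proof.
move=> [_ h].
have hs := card_split S C; rewrite /nS in h.
have [I [HI cI]] : exists I : {set E}, I \subset C :&: ~: S /\ #|I| = (1 + #|C|) %/ 2.
  apply: (@sub_card E _ (C :&: ~: S)); rewrite /nSc; lia.
have [J [HJ cJ]] : exists J : {set E}, J \subset (C :&: ~: S) :\: I /\ #|J| = 1 - #|C| %% 2.
  apply: (@sub_card E _ ((C :&: ~: S) :\: I)); rewrite cardsDS // cI; lia.
by exists (GAttack C J I).
Qed.

Lemma attackB_ex (V E : finType) (src dst : E -> V) S C :
  feasB src dst S C -> exists a, attackB S C a.
Proof.
move=> [_ h1 h2].
have hs := card_split S C; rewrite /nS /nSc in h1 h2 *.
have [J [HJ cJ]] : exists J : {set E}, J \subset C :&: S /\ #|J| = #|C :&: S| + 1 - #|C :&: ~: S|.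
  apply: sub_card; lia.
by exists (GAttack C J (C :&: ~: S)).
Qed.

Lemma prod_ok (V E : finType) (src dst : E -> V) S (R : realFieldType) (pJS pI : R) a :
  produced src dst S pJS pI a -> is_gattack src dst S a /\ detectable a.
Proof.
case: a => C' J I.
move=> [C [[[[cC hC] _] [/= eC HI cI HJ cJ]] | [[[cC h1 h2] _] [/= eC eI HJ cJ]]]]; subst C'.
- have hs := card_split S C; rewrite /nS in hC.
  have HJC : J \subset C.
    apply/subsetP => x /(subsetP HJ); rewrite !inE; by case/and3P.
  split; last by rewrite /detectable /= cardsDS // cJ cI; lia.
  split => //=.
  + apply/subsetP => x xI; rewrite inE (subsetP HI x xI) andbT.
    apply/negP => xJ; have := subsetP HJ x xJ; by rewrite !inE xI.
  + by rewrite -card_gt0 cI; lia.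
- subst I; have hs := card_split S C; rewrite /nS /nSc in h1 h2.
  have HJC : J \subset C.
    apply/subsetP => x /(subsetP HJ); rewrite !inE; by case/andP.
  split; last by rewrite /detectable /= cardsDS // cJ /nS /nSc; lia.
  split => //=.
  + apply/subsetP => x xI; rewrite inE xI andbT.
    apply/negP => xJ; have := subsetP HJ x xJ; move: xI; rewrite !inE.
    by case/andP => _ /negPf ->; rewrite andbF.
  + by rewrite -card_gt0.
Qed.

Lemma bfacts (V E : finType) (src dst : E -> V) S b :
  is_gattack src dst S b -> detectable b ->
  [/\ #|acut b| + 1 <= #|ajam b :&: S| + #|ajam b :&: ~: S| + 2 * #|ainj b|,
      #|ainj b| + #|ajam b :&: ~: S| <= nSc S (acut b),
      #|ajam b :&: S| <= nS S (acut b) & 0 < #|ainj b|].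
Proof.
case: b => C J I [cC /= HJC HI nI]; rewrite /detectable /= => hd.
have hJ := card_split S J.
rewrite cardsDS // in hd.
have i0 : 0 < #|I| by rewrite card_gt0.
have h1 : #|J :&: ~: S| <= #|(C :&: ~: S) :&: J|.
  apply: subset_leq_card; apply/subsetP => x; rewrite !inE => /andP [xJ ->].
  by rewrite xJ (subsetP HJC x xJ).
have h2 := cardsID J (C :&: ~: S).
have h3 : #|I| <= #|(C :&: ~: S) :\: J| by apply: subset_leq_card.
have h4 : #|J :&: S| <= #|C :&: S| by apply: subset_leq_card; apply: setSI.
split; rewrite /nS /nSc //; lia.
Qed.
Lemma kj n : 2 * ((1 + n) %/ 2) + (1 - n %% 2) = n + 1.
Proof.
have h1 := divn_eq (1 + n) 2. have h2 := divn_eq n 2.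
have h3 : (1 + n) %% 2 < 2 by apply: ltn_pmod.
have h4 : n %% 2 < 2 by apply: ltn_pmod.
lia.
Qed.

Local Open Scope ring_scope.
Lemma L1 (R : realFieldType) (pJS pJSc pI : R) (a b c d : nat) :
  0 <= pI -> pI / 2%:R <= pJSc -> pI / 2%:R <= pJS ->
  (2 * d <= a + b + 2 * c)%N ->
  pI * d%:R <= pJS * a%:R + pJSc * b%:R + pI * c%:R.
Proof.
move=> p0 h1 h2 hd.
have hd' : (2 * d)%N%:R <= (a + b + 2 * c)%N%:R :> R by rewrite ler_nat.
rewrite !natrD ?natrM in hd'.
have e : pI = pI / 2%:R + pI / 2%:R by field.
move: h1 h2 p0 hd' e; set q := pI / 2%:R => h1 h2 p0 hd' e.
have ha : 0 <= (pJS - q) * a%:R by apply: mulr_ge0; [lra | rewrite ?ler0n // ; lra].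
have hb : 0 <= (pJSc - q) * b%:R by apply: mulr_ge0; [lra | rewrite ?ler0n // ; lra].
have hq : 0 <= q by lra.
have hc : 0 <= q * ((a%:R + b%:R + c%:R + c%:R) - d%:R - d%:R) by apply: mulr_ge0; [lra | rewrite ?ler0n // ; lra].
rewrite e; nra.
Qed.

Lemma LA (R : realFieldType) (pJS pJSc pI : R) (k j n m js jc i : nat) :
  0 < pJSc -> pJSc <= pJS -> pJS <= pI -> pI / 2%:R <= pJSc -> pI / 2%:R <= pJS ->
  (2 * k + j = n + 1)%N -> (j <= 1)%N -> (n <= m)%N -> (m + 1 <= js + jc + 2 * i)%N ->
  pI * k%:R + pJSc * j%:R <= pJS * js%:R + pJSc * jc%:R + pI * i%:R.
Proof.
move=> h0 h1 h2 h3 h4 e1 hj hn hm.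
have p0 : 0 <= pI by lra.
case: j e1 hj => [|[|//]] e1 _.
  rewrite mulr0 addr0; apply: L1 => //; lia.
rewrite mulr1.
case: jc hm => [|b] hm; case: js hm => [|a] hm.
- have hi : (k + 1 <= i)%N by lia.
  have : (k + 1)%N%:R <= i%:R :> R by rewrite ler_nat.
  rewrite natrD => hk.
  have : pI * (k%:R + 1) <= pI * i%:R by apply: ler_wpM2l.
  rewrite !mulr0 !addr0 add0r; lra.
- have := @L1 R pJS pJSc pI a 0 i k p0 h3 h4 ltac:(lia).
  rewrite -[a.+1]addn1 natrD ?mulr0n ?mulr0 ?addr0; lra.
- have := @L1 R pJS pJSc pI 0 b i k p0 h3 h4 ltac:(lia).
  rewrite -[b.+1]addn1 natrD ?mulr0n ?mulr0 ?addr0; lra.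
- have := @L1 R pJS pJSc pI a.+1 b i k p0 h3 h4 ltac:(lia).
  rewrite -[b.+1]addn1 natrD ?mulr0n ?mulr0 ?addr0; lra.
Qed.

Lemma LB (R : realFieldType) (pJS pJSc pI : R) (s t js jc i : nat) :
  0 < pJSc -> pJSc <= pJS -> pJS <= pI -> pI / 2%:R <= pJSc -> pI / 2%:R <= pJS ->
  (s + t + 1 <= js + jc + 2 * i)%N -> (i + jc <= t)%N ->
  pJS * s%:R + (pI - pJS) * t%:R + pJS <= pJS * js%:R + pJSc * jc%:R + pI * i%:R.
Proof.
move=> h0 h1 h2 h3 h4 hA hB.
have [e He] : exists e, (js = s + t + 1 + e - jc - 2 * i)%N /\ (s + t + 1 + e >= jc + 2 * i)%N.
  exists (js + jc + 2 * i - (s + t + 1))%N; split; lia.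
have [f Hf] : exists f, (t = f + i + jc)%N by exists (t - i - jc)%N; lia.
case: He => Hjs Hge.
have Ejs : js%:R = s%:R + t%:R + 1 + e%:R - jc%:R - 2%:R * i%:R :> R.
  have : (js + jc + 2 * i)%N%:R = (s + t + 1 + e)%N%:R :> R by congr (_%:R); lia.
  rewrite !natrD ?natrM => H; lra.
have Et : t%:R = f%:R + i%:R + jc%:R :> R by rewrite Hf !natrD.
rewrite Ejs Et.
have ha : 0 <= pJS * e%:R by apply: mulr_ge0; [lra | exact: ler0n].
have hb : 0 <= (2%:R * pJS - pI) * f%:R.
  apply: mulr_ge0; [|exact: ler0n].
  have : pI = pI / 2%:R + pI / 2%:R by field.
  lra.
have hc : 0 <= (pJS + pJSc - pI) * jc%:R.
  apply: mulr_ge0; [|exact: ler0n].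
  have : pI = pI / 2%:R + pI / 2%:R by field.
  lra.
lra.
Qed.

Lemma costA_eq (E : finType) S (R : realFieldType) (pJS pJSc pI : R) C (a : gattack E) :
  attackA S C a ->
  cost S pJS pJSc pI a = pI * ((1 + #|C|) %/ 2)%N%:R + pJSc * (1 - #|C| %% 2)%N%:R.
Proof.
case: a => C' J I [/= eC HI cI HJ cJ]; subst C'.
have e1 : J :&: S = set0.
  apply/eqP; rewrite -subset0; apply/subsetP => x; rewrite !inE => /andP [xJ xS].
  by have := subsetP HJ x xJ; rewrite !inE xS /= ?andbF.
have e2 : J :&: ~: S = J.
  apply/setIidPl/subsetP => x xJ; have := subsetP HJ x xJ; rewrite !inE.
  by case/and3P => _ _ ->.
by rewrite /cost /= e1 e2 cards0 cJ cI mulr0 add0r addrC.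
Qed.

Lemma costB_eq (E : finType) S (R : realFieldType) (pJS pJSc pI : R) C (a : gattack E) :
  attackB S C a ->
  cost S pJS pJSc pI a = pJS * (nS S C + 1 - nSc S C)%N%:R + pI * (nSc S C)%:R.
Proof.
case: a => C' J I [/= eC eI HJ cJ]; subst C' I.
have e1 : J :&: ~: S = set0.
  apply/eqP; rewrite -subset0; apply/subsetP => x; rewrite !inE => /andP [xJ xS].
  by have := subsetP HJ x xJ; rewrite !inE (negPf xS) andbF.
have e2 : J :&: S = J.
  apply/setIidPl/subsetP => x xJ; have := subsetP HJ x xJ; rewrite !inE.
  by case/andP.
by rewrite /cost /= e1 e2 cards0 cJ mulr0 addr0.
Qed.

Theorem theorem5 (V E : finType) (src dst : E -> V) (S : {set E})
    (R : realFieldType) (pJS pJSc pI : R) :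
  (forall e, src e != dst e) ->
  (0 < pJSc)%R -> (pJSc <= pJS)%R -> (pJS <= pI)%R ->
  (pI / 2%:R <= pJSc)%R -> (pI / 2%:R <= pJS)%R ->
  forall a : gattack E,
    produced src dst S pJS pI a ->
    (forall b, produced src dst S pJS pI b ->
       (cost S pJS pJSc pI a <= cost S pJS pJSc pI b)%R) ->
    optimal_detectable src dst S pJS pJSc pI a.
Proof.
move=> _ h0 h1 h2 h3 h4 a pa amin.
have [ga da] := prod_ok pa.
split => // b gb db.
have [f1 f2 f3 f4] := bfacts gb db.
have cb := card_split S (acut b).
have Ecb : cost S pJS pJSc pI b =
  pJS * #|ajam b :&: S|%:R + pJSc * #|ajam b :&: ~: S|%:R + pI * #|ainj b|%:R by [].
have [cC _ _ _] := gb.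
case: (ltnP (2 * nS S (acut b)) #|acut b|) => hcase.
- have [C [[cC' hC'] Cmin]] := optA_ex (conj cC hcase).
  have [a' Ha'] := attackA_ex (conj cC' hC').
  have pa' : produced src dst S pJS pI a'.
    by exists C; left; split => //; split => //; split.
  apply: (le_trans (amin _ pa')); rewrite (costA_eq _ _ _ Ha') Ecb.
  have hm := Cmin _ (conj cC hcase).
  apply: (@LA R pJS pJSc pI _ _ #|C| #|acut b|) => //.
  + exact: kj.
  + lia.
- have fB : feasB src dst S (acut b) by split => //; lia.
  have [C [FC Cmin]] := optB_ex pJS pI fB.
  have [a' Ha'] := attackB_ex FC.
  have pa' : produced src dst S pJS pI a'.
    by exists C; right; split => //; split.
  apply: (le_trans (amin _ pa')); rewrite (costB_eq _ _ _ Ha') Ecb.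
  have hw := Cmin _ fB.
  case: FC => _ hC1 hC2.
  have cs := card_split S C.
  have ew : pJS * (nS S C + 1 - nSc S C)%N%:R + pI * (nSc S C)%:R
            = weightB S pJS pI C + pJS.
    rewrite /weightB.
    have : (nS S C + 1 - nSc S C)%N%:R = (nS S C)%:R + 1 - (nSc S C)%:R :> R.
      have : (nS S C + 1 - nSc S C + nSc S C)%N%:R = (nS S C + 1)%N%:R :> R
        by congr (_%:R); rewrite /nS /nSc in hC1 hC2 *; lia.
      rewrite !natrD => H; lra.
    move=> ->; ring.
  rewrite ew.
  apply: (le_trans (lerD hw (lexx pJS))).
  rewrite /weightB.
  apply: (@LB R pJS pJSc pI) => //; rewrite /nS /nSc in cb f2 *; lia.
Qed.
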